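(* Let $M$ be a finite abelian group and $J$ a Jacobi function on $M$, and set $J^*(\alpha,\beta)=-\delta(\alpha)-\delta(\beta)+J(\alpha,\beta)$. Then $J^*(1,\alpha)\neq0$ for every non-trivial $\alpha\in M$.
   Context: $M$ is written multiplicatively with identity $1$; $\delta(\alpha)=1$ if $\alpha=1$ and $0$ otherwise. A Jacobi function on $M$ is a function $J\colon M\times M\to\mathbf{C}$ satisfying: (A) $J(\alpha,\beta)=J(\beta,\alpha)$; (B) $J^*(\alpha,\beta)J^*(\alpha\beta,\gamma)=J^*(\alpha,\beta\gamma)J^*(\beta,\gamma)$; (C) $\sum_{\beta\in M}J(\alpha_1\beta,\alpha_2\beta^{-1})J(\alpha_3\beta,\alpha_4\beta^{-1})=J(\alpha_1\alpha_4,\alpha_2\alpha_3)$; all for all elements of $M$. *)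

(* Defs.v *)
From HB Require Import structures.
From mathcomp Require Import all_boot all_order all_algebra all_fingroup.
From mathcomp Require Import complex.
From mathcomp Require Import Rstruct.
Set Implicit Arguments. Unset Strict Implicit. Unset Printing Implicit Defensive.
Import GRing.Theory.
Local Open Scope ring_scope.

Definition CC := complex Rdefinitions.R.

Section Jacobi.
Variable gT : finGroupType.

Definition delta (a : gT) : CC := if a == 1%g then 1%R else 0%R.

Definition Jstar (J : gT -> gT -> CC) (a b : gT) : CC :=
  (- delta a - delta b + J a b)%R.

Definition is_Jacobi (J : gT -> gT -> CC) : Prop :=
  [/\ (forall a b : gT, J a b = J b a),
      (forall a b c : gT, Jstar J a b * Jstar J (a * b)%g c =
                      Jstar J a (b * c)%g * Jstar J b c) &
      (forall a1 a2 a3 a4 : gT,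
         \sum_(b : gT) J (a1 * b)%g (a2 * b^-1)%g * J (a3 * b)%g (a4 * b^-1)%g
         = J (a1 * a4)%g (a2 * a3)%g)].
End Jacobi.

(* Main.v *)
Require Import Defs.
From HB Require Import structures.
From mathcomp Require Import all_boot all_order all_algebra all_fingroup.
From mathcomp Require Import complex Rstruct.
From mathcomp Require Import ring lra.

Section Aux.
Import GRing.Theory Num.Theory Order.TTheory.
Local Open Scope ring_scope.
Local Open Scope complex_scope.

Variable M : finGroupType.
Hypothesis Mabel : forall x y : M, (x * y = y * x)%g.
Variable J : M -> M -> CC.
Hypothesis HJ : is_Jacobi J.

Definition gg (n x : M) : CC := J x (n * x^-1)%g.
Definition QQ (n : M) : CC := \sum_(x : M) gg n x * conjc (gg n x).

Lemma gg_sq n u : \sum_(x : M) gg n x * gg n (u * x^-1)%g = gg (n * n)%g u.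
Proof.
case: HJ => HA _ HC.
have := HC 1%g n (n * u^-1)%g u.
rewrite /gg mul1g mulgA => <-.
apply: eq_bigr => x _; rewrite mul1g; congr (_ * _).
rewrite HA; congr J.
  by rewrite invMg invgK -mulgA (Mabel u^-1 x) mulgA.
Qed.

Lemma QQ_ge0 n : 0 <= QQ n.
Proof. by apply: sumr_ge0 => x _; apply: mulcJ_ge0. Qed.

Lemma QQ_conj n : conjc (QQ n) = QQ n.
Proof.
rewrite /QQ rmorph_sum; apply: eq_bigr => x _.
by rewrite rmorphM /= conjcK mulrC.
Qed.

Lemma QQ_sq n : QQ n * QQ n <= QQ (n * n)%g.
Proof.
set c := gg n.
pose h (v : M) := \sum_(x : M) c x * conjc (c (x * v^-1)%g).
have E : QQ (n * n)%g = \sum_(v : M) h v * conjc (h v).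
  rewrite /QQ.
  under eq_bigr => u _ do rewrite -gg_sq rmorph_sum /= mulr_suml.
  under [RHS]eq_bigr => v _ do rewrite rmorph_sum /= mulr_suml.
  rewrite exchange_big [RHS]exchange_big /=.
  apply: eq_bigr => x _.
  under eq_bigr => u _ do rewrite mulr_sumr.
  under [RHS]eq_bigr => v _ do rewrite mulr_sumr.
  rewrite exchange_big /= [RHS]exchange_big /=.
  apply: eq_bigr => y _.
  rewrite (@reindex_inj _ _ _ _ (fun v => (x * y * v^-1)%g)); last first.
    by move=> a b /= /mulgI /invg_inj.
  apply: eq_bigr => v _ /=.
  rewrite !rmorphM /= conjcK.
  have -> : (x * y * v^-1 * x^-1 = y * v^-1)%g.
    by rewrite (Mabel _ x^-1) -!mulgA mulKg.
  have -> : (x * y * v^-1 * y^-1 = x * v^-1)%g.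
    by rewrite -!mulgA (Mabel v^-1 y^-1) mulKVg.
  rewrite /c; ring.
rewrite E (bigD1 1%g) //=.
have -> : h 1%g = QQ n.
  by rewrite /h /QQ; apply: eq_bigr => x _; rewrite invg1 mulg1.
rewrite QQ_conj -[X in X <= _]addr0 lerD2l.
by apply: sumr_ge0 => v _; apply: mulcJ_ge0.
Qed.

Definition Qr (n : M) : Rdefinitions.R := complex.Re (QQ n).

Lemma QQE n : QQ n = (Qr n)%:C.
Proof.
have := ger0_Im (QQ_ge0 n); rewrite /Qr; case: (QQ n) => a b /= ->; by [].
Qed.

Lemma Qr_ge0 n : 0 <= Qr n.
Proof. by have := QQ_ge0 n; rewrite QQE lecR. Qed.

Lemma Qr_sq n : Qr n * Qr n <= Qr (n * n)%g.
Proof. by have := QQ_sq n; rewrite !QQE -rmorphM lecR. Qed.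

Lemma Qr_le1 n : Qr n <= 1.
Proof.
have [m _ Hm] := (@arg_maxP _ _ M 1%g predT Qr isT).
have h1 : Qr m * Qr m <= Qr m := le_trans (Qr_sq m) (Hm _ isT).
have h0 := Qr_ge0 m.
apply: le_trans (Hm _ isT) _.
rewrite leNgt; apply/negP => hm.
have : Qr m * 1 < Qr m * Qr m by rewrite ltr_pM2l // (lt_trans ltr01 hm).
by rewrite mulr1 ltNge h1.
Qed.

Lemma QQ_ge2 {a} : a != 1%g -> J 1%g a = 1 -> (2%:R : CC) <= QQ a.
Proof.
move=> na H1.
case: HJ => HA _ _.
rewrite /QQ (bigD1 1%g) //= (bigD1 a) //=.
have -> : gg a 1%g = 1 by rewrite /gg invg1 mulg1.
have -> : gg a a = 1 by rewrite /gg mulgV HA.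
rewrite conjc1 mulr1 addrA -[X in X <= _]addr0 lerD2l.
by apply: sumr_ge0 => v _; apply: mulcJ_ge0.
Qed.

Lemma main_aux a : a != 1%g -> Jstar J 1%g a != 0.
Proof.
move=> na; apply/negP => /eqP H.
have H1 : J 1%g a = 1.
  move: H; rewrite /Jstar /delta eqxx (negbTE na) subr0 addrC => /eqP.
  by rewrite subr_eq0 => /eqP.
have := QQ_ge2 (a := a) na H1; rewrite QQE -(rmorph_nat (real_complex Rdefinitions.R)).
rewrite lecR => h2.
have := le_trans h2 (Qr_le1 a).
by rewrite leNgt ltr1n.
Qed.

End Aux.

Theorem mainTheorem8 (M : finGroupType)
  (Mabel : forall x y : M, (x * y = y * x)%g)
  (J : M -> M -> CC) (HJ : is_Jacobi J) :
  forall a : M, a != 1%g -> Jstar J 1%g a != 0%R.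
Proof. exact (main_aux M Mabel J HJ). Qed.
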